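(* Let $A$ and $B$ be $\Bbbk$-algebras. Then there are isomorphisms of $\Bbbk$-vector spaces (1) $\mathcal{E}_{A\times B}\cong\mathcal{E}_A\times\mathcal{E}_B$; in particular $\operatorname{Frobdim}(A\times B)=\operatorname{Frobdim}(A)+\operatorname{Frobdim}(B)$; (2) $\mathcal{E}_{A\otimes B}\cong\mathcal{E}_A\otimes\mathcal{E}_B$; therefore $\operatorname{Frobdim}(A\otimes B)=\operatorname{Frobdim}(A)\cdot\operatorname{Frobdim}(B)$.
   Context: Algebras are associative and unital over a field $\Bbbk$; tensor products are over $\Bbbk$; $A\times B$ is the product algebra with componentwise operations and $A\otimes B$ the tensor product algebra. A nearly Frobenius coproduct on an algebra $A$ is a $\Bbbk$-linear map $\Delta:A\to A\otimes A$ that is an $A$-bimodule morphism, i.e. $\Delta(ab)=(a\otimes 1)\Delta(b)=\Delta(a)(1\otimes b)$ for all $a,b\in A$. The Frobenius space $\mathcal{E}_A$ is the vector space of all nearly Frobenius coproducts on $A$, and $\operatorname{Frobdim}A=\dim_\Bbbk\mathcal{E}_A$. *)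

(* Defs.v *)
(* Finite-dimensional algebras over a field K, given in
   coordinates on K^n (row vectors 'rV[K]_n). *)
From HB Require Import structures.
From mathcomp Require Import all_boot all_order all_algebra.
From Stdlib Require Import ClassicalEpsilon.
Set Implicit Arguments. Unset Strict Implicit. Unset Printing Implicit Defensive.
Import GRing.Theory.
Local Open Scope ring_scope.

Section Defs.
Variable K : fieldType.

Record algd (n : nat) := AlgD {
  amul : 'rV[K]_n -> 'rV[K]_n -> 'rV[K]_n;
  aone : 'rV[K]_n }.

Definition is_alg (n : nat) (A : algd n) : Prop :=
  [/\ (forall (k : K) a b c, amul A (k *: a + b) c = k *: amul A a c + amul A b c),
      (forall (k : K) a b c, amul A a (k *: b + c) = k *: amul A a b + amul A a c),
      (forall a b c, amul A a (amul A b c) = amul A (amul A a b) c),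
      (forall a, amul A (aone A) a = a) &
      (forall a, amul A a (aone A) = a)].

(* Tensor product of vectors: K^p (x) K^q identified with K^(p*q) via mxvec;
   tens u v has coordinate u_i v_j at index (i,j). *)
Definition tens (p q : nat) (u : 'rV[K]_p) (v : 'rV[K]_q) : 'rV[K]_(p * q) :=
  mxvec (u^T *m v).

Definition ev (p : nat) (i : 'I_p) : 'rV[K]_p := delta_mx 0 i.

(* Multiplication of the tensor product algebra A (x) B:
   (a (x) b)(a' (x) b') = aa' (x) bb', extended bilinearly. *)
Definition tmul (n m : nat) (A : algd n) (B : algd m) (x y : 'rV[K]_(n * m)) :
    'rV[K]_(n * m) :=
  \sum_(i < n) \sum_(j < m) \sum_(k < n) \sum_(l < m)
     ((vec_mx x) i j * (vec_mx y) k l) *: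
        tens (amul A (ev i) (ev k)) (amul B (ev j) (ev l)).

Definition talg (n m : nat) (A : algd n) (B : algd m) : algd (n * m) :=
  AlgD (tmul A B) (tens (aone A) (aone B)).

Definition palg (n m : nat) (A : algd n) (B : algd m) : algd (n + m) :=
  AlgD (fun x y => row_mx (amul A (lsubmx x) (lsubmx y)) (amul B (rsubmx x) (rsubmx y)))
       (row_mx (aone A) (aone B)).

(* A K-linear map Delta : A -> A (x) A is given by its matrix D,
   Delta(a) = a *m D.  Nearly Frobenius coproduct condition:
   Delta(ab) = (a (x) 1) Delta(b) = Delta(a) (1 (x) b). *)
Definition is_nf (n : nat) (A : algd n) (D : 'M[K]_(n, n * n)) : Prop :=
  forall a b,
    amul A a b *m D = tmul A A (tens a (aone A)) (b *m D) /\
    amul A a b *m D = tmul A A (a *m D) (tens (aone A) b).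

(* The Frobenius space E_A: the subspace of all nearly Frobenius coproducts
   (defined by description: the subspace whose members are exactly them). *)
Definition frobspace (n : nat) (A : algd n) : {vspace 'M[K]_(n, n * n)} :=
  epsilon (inhabits 0%VS) (fun U : {vspace 'M[K]_(n, n * n)} =>
                             forall D, D \in U <-> is_nf A D).

Definition Frobdim (n : nat) (A : algd n) : nat := \dim (frobspace A).

(* Tensor product of subspaces U <= K^(p x q), W <= K^(r x s), realised inside
   K^(pq) (x) K^(rs) = K^((p*q)*(r*s)) as the span of the u (x) w. *)
Definition vtens (p q r s : nat) (U : {vspace 'M[K]_(p, q)}) (W : {vspace 'M[K]_(r, s)})
    : {vspace 'rV[K]_((p * q) * (r * s))} :=
  << [seq tens (mxvec X) (mxvec Y) | X <- vbasis U, Y <- vbasis W] >>%VS.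

End Defs.

(* Main.v *)
Require Import Defs.
From HB Require Import structures.
From mathcomp Require Import all_boot all_order all_algebra.
From Stdlib Require Import ClassicalEpsilon.
From mathcomp Require Import ring zify.
From Stdlib Require Import Classical Setoid Morphisms FunctionalExtensionality.
Set Implicit Arguments. Unset Strict Implicit. Unset Printing Implicit Defensive.
Import GRing.Theory.
Local Open Scope ring_scope.

Section Wrap.
Variables (K : fieldType) (U V : lmodType K) (f : U -> V).
Definition lwrap (H : linear f) := f.
HB.instance Definition _ (H : linear f) := GRing.isSemilinear.Build K U V _ (lwrap H) (GRing.semilinear_linear H).
End Wrap.

#[global] Instance bigop_proper (R I : Type) (idx : R) (r : seq I) :
  Proper (pointwise_relation I eq ==> eq) (@bigop R I idx r).
Proof. by move=> f g H; rewrite (functional_extensionality _ _ H). Qed.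

Section S.
Variable K : fieldType.
Definition dec p q (I : 'I_(p*q)) : 'I_p * 'I_q := enum_val (cast_ord (esym (mxvec_cast p q)) I).
Lemma decK p q (i : 'I_p) (j : 'I_q) : dec (mxvec_index i j) = (i, j).
Proof. by rewrite /dec /mxvec_index cast_ordK enum_rankK. Qed.
Lemma decI p q (I : 'I_(p*q)) : mxvec_index (dec I).1 (dec I).2 = I.
Proof. by case/mxvec_indexP: I => i j; rewrite decK. Qed.
Lemma sum_mxvec p q (F : 'I_(p*q) -> K) :
  \sum_I F I = \sum_i \sum_j F (mxvec_index i j).
Proof.
rewrite pair_big /=. rewrite (reindex (fun ij : 'I_p * 'I_q => mxvec_index ij.1 ij.2)) //=.
exists (@dec p q) => [[i j] _|I _]; by rewrite ?decK ?decI.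
Qed.

Lemma tensE p q (u : 'rV[K]_p) (v : 'rV[K]_q) i j :
  tens u v 0 (mxvec_index i j) = u 0 i * v 0 j.
Proof. by rewrite /tens mxvecE mxE big_ord1 mxE. Qed.

Lemma evE p (i j : 'I_p) : ev K i 0 j = (i == j)%:R.
Proof. by rewrite /ev mxE eqxx eq_sym. Qed.

Lemma sum_delta p (j : 'I_p) (F : 'I_p -> K) : \sum_t (j == t)%:R * F t = F j.
Proof.
rewrite (bigD1 j) //= eqxx mul1r big1 ?addr0 // => t /negbTE.
by rewrite eq_sym => ->; rewrite mul0r.
Qed.
Lemma sum_delta' p (j : 'I_p) (F : 'I_p -> K) : \sum_t F t * (t == j)%:R = F j.
Proof.
rewrite (bigD1 j) //= eqxx mulr1 big1 ?addr0 // => t /negbTE ->.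
by rewrite mulr0.
Qed.

Lemma tens_linl p q (v : 'rV[K]_q) : linear (fun u : 'rV[K]_p => tens u v).
Proof.
move=> k u u'; apply/rowP => x; case/mxvec_indexP: x => i j.
by rewrite !(mxE, tensE) mulrDl mulrA.
Qed.
Lemma tens_linr p q (u : 'rV[K]_p) : linear (fun v : 'rV[K]_q => tens u v).
Proof.
move=> k v v'; apply/rowP => x; case/mxvec_indexP: x => i j.
by rewrite !(mxE, tensE) mulrDr mulrCA.
Qed.

Lemma tensDl p q (u u' : 'rV[K]_p) (v : 'rV[K]_q) k :
  tens (k *: u + u') v = k *: tens u v + tens u' v.
Proof. exact: (tens_linl v). Qed.
Lemma tensDr p q (u : 'rV[K]_p) (v v' : 'rV[K]_q) k :
  tens u (k *: v + v') = k *: tens u v + tens u v'.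
Proof. exact: (tens_linr u). Qed.

Lemma tmulE n m (A : algd K n) (B : algd K m) x y r s :
  tmul A B x y 0 (mxvec_index r s) =
  \sum_i \sum_j \sum_k \sum_l x 0 (mxvec_index i j) * y 0 (mxvec_index k l) *
     (amul A (ev K i) (ev K k) 0 r * amul B (ev K j) (ev K l) 0 s).
Proof.
rewrite /tmul summxE; apply: eq_bigr => i _; rewrite summxE; apply: eq_bigr => j _.
rewrite summxE; apply: eq_bigr => k _; rewrite summxE; apply: eq_bigr => l _.
by rewrite !mxE tensE.
Qed.

Lemma tmul_linr n m (A : algd K n) (B : algd K m) x : linear (tmul A B x).
Proof.
move=> k y z; apply/rowP => X; case/mxvec_indexP: X => r s.
rewrite !mxE !tmulE mulr_sumr -big_split; apply: eq_bigr => i _ /=.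
rewrite mulr_sumr -big_split; apply: eq_bigr => j _ /=.
rewrite mulr_sumr -big_split; apply: eq_bigr => k' _ /=.
rewrite mulr_sumr -big_split; apply: eq_bigr => l _ /=.
rewrite !mxE; ring.
Qed.
Lemma tmul_linl n m (A : algd K n) (B : algd K m) y : linear (tmul A B ^~ y).
Proof.
move=> k x z; apply/rowP => X; case/mxvec_indexP: X => r s.
rewrite !mxE !tmulE mulr_sumr -big_split; apply: eq_bigr => i _ /=.
rewrite mulr_sumr -big_split; apply: eq_bigr => j _ /=.
rewrite mulr_sumr -big_split; apply: eq_bigr => k' _ /=.
rewrite mulr_sumr -big_split; apply: eq_bigr => l _ /=.
rewrite !mxE; ring.
Qed.

Lemma lin_exp p (V : lmodType K) (f : 'rV[K]_p -> V) :
  linear f -> forall a, f a = \sum_i a 0 i *: f (ev K i).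
Proof.
move=> Hf a; rewrite {1}(row_sum_delta a).
change (lwrap Hf (\sum_j a 0 j *: delta_mx 0 j) = \sum_i a 0 i *: f (ev K i)).
by rewrite linear_sum; apply: eq_bigr => i _; rewrite linearZ.
Qed.

Lemma vspace_of (vT : vectType K) (P : vT -> Prop) :
  P 0 -> (forall k u v, P u -> P v -> P (k *: u + v)) ->
  exists U : {vspace vT}, forall v, v \in U <-> P v.
Proof.
move=> P0 Pc.
have spanP (s : seq vT) : (forall x, x \in s -> P x) -> forall v, v \in <<s>>%VS -> P v.
  move=> Ps v Hv; rewrite (@coord_span _ _ _ (in_tuple s) v Hv); elim/big_rec: _ => [//|i x _ Px]; apply: Pc => //.
  by apply: Ps; apply: mem_nth.
suff main : forall k (s : seq vT), (forall x, x \in s -> P x) ->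
    (\dim {:vT} - \dim <<s>> <= k)%N -> exists U : {vspace vT}, forall v, v \in U <-> P v.
  by apply: (main _ [::]) => //.
elim=> [|k IH] s Ps Hk.
  case: (classic (forall v, P v -> v \in <<s>>%VS)) => Hs.
    by exists <<s>>%VS => v; split; [apply: spanP|apply: Hs].
  have [v Hv] := not_all_ex_not _ _ Hs; have [Pv /negP/negbTE nv] := imply_to_and _ _ Hv.
  have lt1 : (\dim <<s>> < \dim <<v :: s>>)%N.
    rewrite span_cons ltn_neqAle (dimv_leqif_sup (addvSr _ _)) subv_add negb_and.
    by rewrite -memvE nv /= dimvS // addvSr.
  have le1 : (\dim <<v :: s>> <= \dim {:vT})%N by apply: dimvS; apply: subvf.
  lia.
case: (classic (forall v, P v -> v \in <<s>>%VS)) => Hs.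
  by exists <<s>>%VS => v; split; [apply: spanP|apply: Hs].
have [v Hv] := not_all_ex_not _ _ Hs; have [Pv /negP/negbTE nv] := imply_to_and _ _ Hv.
have lt1 : (\dim <<s>> < \dim <<v :: s>>)%N.
  rewrite span_cons ltn_neqAle (dimv_leqif_sup (addvSr _ _)) subv_add negb_and.
  by rewrite -memvE nv /= dimvS // addvSr.
have le1 : (\dim <<v :: s>> <= \dim {:vT})%N by apply: dimvS; apply: subvf.
apply: (IH (v :: s)); last by lia.
by move=> x; rewrite inE => /orP [/eqP ->|/Ps].
Qed.

Lemma nf0 n (A : algd K n) : is_nf A 0.
Proof.
move=> a b; rewrite !mulmx0.
have H1 := tmul_linr A A (tens a (aone A)); have H2 := tmul_linl A A (tens (aone A) b).
change (0 = lwrap H1 0 /\ 0 = lwrap H2 0); by rewrite !linear0.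
Qed.

Lemma nfc_lin n (A : algd K n) k D1 D2 : is_nf A D1 -> is_nf A D2 -> is_nf A (k *: D1 + D2).
Proof.
move=> N1 N2 a b; have [E1 E2] := N1 a b; have [F1 F2] := N2 a b.
rewrite !mulmxDr -!scalemxAr tmul_linr tmul_linl -E1 -E2 -F1 -F2; by [].
Qed.

Lemma frobP n (A : algd K n) D : D \in frobspace A <-> is_nf A D.
Proof.
rewrite /frobspace; set P := (fun U : {vspace _} => _).
have := @epsilon_spec _ (inhabits 0%VS) P (vspace_of (@nf0 n A) (fun k u v => @nfc_lin n A k u v)).
by move=> ->.
Qed.
End S.

Section S.
Variable K : fieldType.
Local Notation ev := (ev K).

Definition ualg n (A : algd K n) :=
  [/\ (forall (k : K) a b c, amul A (k *: a + b) c = k *: amul A a c + amul A b c),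
      (forall (k : K) a b c, amul A a (k *: b + c) = k *: amul A a b + amul A a c),
      (forall a, amul A (aone A) a = a) &
      (forall a, amul A a (aone A) = a)].

Lemma alg_ualg n (A : algd K n) : is_alg A -> ualg A.
Proof. by case. Qed.

Definition cst n (A : algd K n) i k r := amul A (ev i) (ev k) 0 r.

Section U.
Variables (n : nat) (A : algd K n) (H : ualg A).

Lemma amul_linl b : linear (amul A ^~ b).
Proof. by case: H => H1 _ _ _ k x y; rewrite H1. Qed.
Lemma amul_linr a : linear (amul A a).
Proof. by case: H => _ H2 _ _ k x y; rewrite H2. Qed.

Lemma amul0l b : amul A 0 b = 0.
Proof. exact: (linear0 (lwrap (amul_linl b))). Qed.
Lemma amul0r a : amul A a 0 = 0.
Proof. exact: (linear0 (lwrap (amul_linr a))). Qed.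

Lemma amul_expl a b : amul A a b = \sum_i a 0 i *: amul A (ev i) b.
Proof. exact: (lin_exp (amul_linl b)). Qed.
Lemma amul_expr a b : amul A a b = \sum_k b 0 k *: amul A a (ev k).
Proof. exact: (lin_exp (amul_linr a)). Qed.

Lemma amulE a b r : amul A a b 0 r = \sum_i \sum_k a 0 i * b 0 k * cst A i k r.
Proof.
rewrite amul_expl summxE; apply: eq_bigr => i _.
rewrite mxE amul_expr summxE mulr_sumr; apply: eq_bigr => k _.
by rewrite mxE mulrA.
Qed.

Lemma unitl k r : \sum_i aone A 0 i * cst A i k r = (k == r)%:R.
Proof.
case: H => _ _ H3 _; rewrite -(evE K k r) -{1}(H3 (ev k)) amul_expl summxE.
by apply: eq_bigr => i _; rewrite mxE.
Qed.
Lemma unitr i r : \sum_k cst A i k r * aone A 0 k = (i == r)%:R.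
Proof.
case: H => _ _ _ H4; rewrite -(evE K i r) -{1}(H4 (ev i)) amul_expr summxE.
by apply: eq_bigr => k _; rewrite mxE mulrC.
Qed.

Lemma L1 a y r s :
  tmul A A (tens a (aone A)) y 0 (mxvec_index r s) =
  \sum_u y 0 (mxvec_index u s) * amul A a (ev u) 0 r.
Proof.
rewrite tmulE.
transitivity (\sum_p \sum_u \sum_v (a 0 p * y 0 (mxvec_index u v) * cst A p u r) *
                 \sum_q (aone A 0 q * cst A q v s)).
  apply: eq_bigr => p _; rewrite exchange_big; apply: eq_bigr => u _.
  rewrite exchange_big; apply: eq_bigr => v _; rewrite mulr_sumr; apply: eq_bigr => q _.
  rewrite tensE /cst; ring.
under eq_bigr => p _ do under eq_bigr => u _ do rewrite (eq_bigr _ (fun v _ => congr1 _ (unitl v s))) sum_delta'.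
rewrite exchange_big; apply: eq_bigr => u _.
rewrite amul_expl summxE mulr_sumr; apply: eq_bigr => p _; rewrite mxE /cst; ring.
Qed.

Lemma L2 x b r s :
  tmul A A x (tens (aone A) b) 0 (mxvec_index r s) =
  \sum_v x 0 (mxvec_index r v) * amul A (ev v) b 0 s.
Proof.
rewrite tmulE.
transitivity (\sum_p \sum_q \sum_v (x 0 (mxvec_index p q) * b 0 v * cst A q v s) *
                 \sum_u (cst A p u r * aone A 0 u)).
  apply: eq_bigr => p _; apply: eq_bigr => q _.
  rewrite exchange_big; apply: eq_bigr => v _; rewrite mulr_sumr; apply: eq_bigr => u _.
  rewrite tensE /cst; ring.
under eq_bigr => p _ do under eq_bigr => q _ do rewrite (eq_bigr _ (fun v _ => congr1 _ (unitr p r))).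
transitivity (\sum_p (r == p)%:R * \sum_q \sum_v (x 0 (mxvec_index p q) * b 0 v * cst A q v s)).
  apply: eq_bigr => p _; rewrite eq_sym mulr_sumr; apply: eq_bigr => q _; rewrite mulr_sumr.
  by apply: eq_bigr => v _; rewrite mulrC.
rewrite (@sum_delta K n r (fun p => \sum_q \sum_v (x 0 (mxvec_index p q) * b 0 v * cst A q v s))).
apply: eq_bigr => q _.
rewrite amul_expr summxE mulr_sumr; apply: eq_bigr => v _; rewrite mxE /cst; ring.
Qed.

Definition nfc (D : 'M[K]_(n, n * n)) := forall i k r s,
  \sum_t cst A i k t * D t (mxvec_index r s) = \sum_u D k (mxvec_index u s) * cst A i u r /\
  \sum_t cst A i k t * D t (mxvec_index r s) = \sum_v D i (mxvec_index r v) * cst A v k s.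

Lemma evmulE N i x (D : 'M[K]_(n, N)) : (ev i *m D) 0 x = D i x.
Proof. by rewrite -rowE mxE. Qed.

Lemma nfP D : is_nf A D <-> nfc D.
Proof.
split.
  move=> N i k r s; have [E1 E2] := N (ev i) (ev k).
  have F1 := congr1 (fun M : 'rV[K]_(n * n) => M 0 (mxvec_index r s)) E1.
  have F2 := congr1 (fun M : 'rV[K]_(n * n) => M 0 (mxvec_index r s)) E2.
  rewrite /= L1 mxE in F1; rewrite /= L2 mxE in F2.
  split.
    by rewrite F1; apply: eq_bigr => u _; rewrite evmulE.
  by rewrite F2; apply: eq_bigr => v _; rewrite evmulE.
move=> N.
have B1 i k : amul A (ev i) (ev k) *m D = tmul A A (tens (ev i) (aone A)) (ev k *m D).
  apply/rowP => x; case/mxvec_indexP: x => r s; rewrite mxE L1.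
  rewrite (N i k r s).1; by apply: eq_bigr => u _; rewrite evmulE.
have B2 i k : amul A (ev i) (ev k) *m D = tmul A A (ev i *m D) (tens (aone A) (ev k)).
  apply/rowP => x; case/mxvec_indexP: x => r s; rewrite mxE L2.
  rewrite (N i k r s).2; by apply: eq_bigr => u _; rewrite evmulE.
have expL a b : amul A a b *m D = \sum_i a 0 i *: \sum_k b 0 k *: (amul A (ev i) (ev k) *m D).
  rewrite amul_expl mulmx_suml; apply: eq_bigr => i _; rewrite -scalemxAl amul_expr.
  by rewrite mulmx_suml; congr (_ *: _); apply: eq_bigr => k _; rewrite -scalemxAl.
move=> a b; split.
  have La : linear (fun a => tmul A A (tens a (aone A)) (b *m D)).
    by move=> c x y; rewrite /= tensDl tmul_linl.
  rewrite expL (lin_exp La a); apply: eq_bigr => i _; congr (_ *: _).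
  have Lb : linear (fun b => tmul A A (tens (ev i) (aone A)) (b *m D)).
    by move=> c x y; rewrite /= mulmxDl -scalemxAl tmul_linr.
  rewrite (lin_exp Lb b); apply: eq_bigr => k _; by rewrite B1.
have La : linear (fun a => tmul A A (a *m D) (tens (aone A) b)).
  by move=> c x y; rewrite /= mulmxDl -scalemxAl tmul_linl.
rewrite expL (lin_exp La a); apply: eq_bigr => i _; congr (_ *: _).
have Lb : linear (fun b => tmul A A (ev i *m D) (tens (aone A) b)).
  by move=> c x y; rewrite /= tensDr tmul_linr.
rewrite (lin_exp Lb b); apply: eq_bigr => k _; by rewrite B2.
Qed.

Lemma frob_nfc D : D \in frobspace A <-> nfc D.
Proof. by rewrite frobP nfP. Qed.

End U.
End S.

Arguments cst : simpl never.

Section G.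
Variable K : fieldType.
Local Notation ev := (ev K).
Variables (p1 q1 p2 q2 : nat).
Variables (U : {vspace 'M[K]_(p1, q1)}) (W : {vspace 'M[K]_(p2, q2)}).

Lemma span_entry p q (V : {vspace 'M[K]_(p, q)}) (v : 'rV[K]_(p * q)) a :
  vec_mx v \in V ->
  v 0 a = \sum_x coord (vbasis V) x (vec_mx v) * (mxvec (vbasis V)`_x) 0 a.
Proof.
move=> Hv; rewrite -(span_basis (vbasisP V)) in Hv.
have E := coord_span Hv.
rewrite -{1}(vec_mxK v) {1}E; case/mxvec_indexP: a => i j.
rewrite mxvecE summxE; apply: eq_bigr => x _; by rewrite mxE mxvecE.
Qed.

Lemma coordvec_lin p q (V : {vspace 'M[K]_(p, q)}) x :
  linear (fun v : 'rV[K]_(p * q) => (coord (vbasis V) x (vec_mx v) : K^o)).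
Proof. by move=> k u v; rewrite /= !linearP. Qed.

Lemma tens_in_span (T : 'rV[K]_((p1 * q1) * (p2 * q2))) :
  (forall b, vec_mx (\row_a T 0 (mxvec_index a b)) \in U) ->
  (forall a, vec_mx (\row_b T 0 (mxvec_index a b)) \in W) -> T \in vtens U W.
Proof.
move=> HU HW.
set bu := vbasis U; set bw := vbasis W.
pose kap x b := coord bu x (vec_mx (\row_a T 0 (mxvec_index a b))).
pose r x : 'rV[K]_(p2 * q2) := \row_b kap x b.
have rW x : vec_mx (r x) \in W.
  have -> : r x = \sum_a (coord bu x (vec_mx (ev a))) *: \row_b T 0 (mxvec_index a b).
    apply/rowP => b; rewrite mxE summxE /kap.
    rewrite (lin_exp (coordvec_lin x)) /=; apply: eq_bigr => a _.
    by rewrite !mxE mulrC.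
  rewrite linear_sum; apply: memv_suml => a _; rewrite linearZ; apply: memvZ; exact: HW.
pose lam x y := coord bw y (vec_mx (r x)).
suff -> : T = \sum_x \sum_y lam x y *: tens (mxvec bu`_x) (mxvec bw`_y).
  apply: memv_suml => x _; apply: memv_suml => y _; apply: memvZ; apply: memv_span.
  by apply: allpairs_f; apply: mem_nth; rewrite size_tuple.
apply/rowP => Z; case/mxvec_indexP: Z => a b.
have -> : T 0 (mxvec_index a b) = (\row_a' T 0 (mxvec_index a' b)) 0 a by rewrite mxE.
rewrite (span_entry a (HU b)) summxE; apply: eq_bigr => x _.
rewrite summxE.
have -> : coord (vbasis U) x (vec_mx (\row_a0 T 0 (mxvec_index a0 b))) = r x 0 b by rewrite mxE.
rewrite (span_entry b (rW x)) mulr_suml; apply: eq_bigr => y _.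
by rewrite !mxE tensE /lam; ring.
Qed.

Lemma dim_vtens : \dim (vtens U W) = (\dim U * \dim W)%N.
Proof.
set bu := vbasis U; set bw := vbasis W.
pose kap x (v : 'rV[K]_(p1 * q1)) : K := coord bu x (vec_mx v).
pose mu y (w : 'rV[K]_(p2 * q2)) : K := coord bw y (vec_mx w).
pose Phi (T : 'rV[K]_((p1 * q1) * (p2 * q2))) : 'M[K]_(\dim U, \dim W) :=
  \matrix_(x, y) \sum_al \sum_be T 0 (mxvec_index al be) * kap x (ev al) * mu y (ev be).
have Phi_lin : linear Phi.
  move=> k T1 T2; apply/matrixP => x y; rewrite !mxE mulr_sumr -big_split.
  apply: eq_bigr => al _; rewrite mulr_sumr -big_split; apply: eq_bigr => be _.
  rewrite !mxE /=; ring.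
set F := linfun (lwrap Phi_lin).
have kapE x u : kap x u = \sum_al u 0 al * kap x (ev al).
  exact: (lin_exp (coordvec_lin x) u).
have muE y w : mu y w = \sum_be w 0 be * mu y (ev be).
  exact: (lin_exp (coordvec_lin y) w).
have Ftens u w x y : F (tens u w) x y = kap x u * mu y w.
  rewrite lfunE /= /lwrap mxE kapE muE mulr_suml; apply: eq_bigr => al _.
  rewrite mulr_sumr; apply: eq_bigr => be _; rewrite tensE; ring.
have fu := basis_free (vbasisP U); have fw := basis_free (vbasisP W).
have Fdelta (x : 'I_(\dim U)) (y : 'I_(\dim W)) : F (tens (mxvec bu`_x) (mxvec bw`_y)) = delta_mx x y.
  apply/matrixP => x' y'; rewrite Ftens /kap /mu !mxvecK !coord_free // mxE.
  by rewrite -natrM mulnb [x' == x]eq_sym [y' == y]eq_sym.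
have mem (x : 'I_(\dim U)) (y : 'I_(\dim W)) : tens (mxvec bu`_x) (mxvec bw`_y) \in vtens U W.
  by apply: memv_span; apply: allpairs_f; apply: mem_nth; rewrite size_tuple.
have full : (fullv <= F @: vtens U W)%VS.
  apply/subvP => M _; rewrite (matrix_sum_delta M); apply: memv_suml => x _.
  apply: memv_suml => y _; apply: memvZ; rewrite -Fdelta; exact: memv_img.
have le1 : (\dim (F @: vtens U W) <= \dim (vtens U W))%N.
  by rewrite -(limg_ker_dim F (vtens U W)) leq_addl.
have le2 : (\dim (vtens U W) <= \dim U * \dim W)%N.
  by apply: leq_trans (dim_span _) _; rewrite size_allpairs !size_tuple.
have ge : (\dim U * \dim W <= \dim (F @: vtens U W))%N.
  by have := dimvS full; rewrite dimvf.
lia.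
Qed.

End G.

Section T.
Variable K : fieldType.
Local Notation ev := (ev K).
Variables (n m : nat) (A : algd K n) (B : algd K m) (HA : ualg A) (HB : ualg B).
Local Notation Tg := (talg A B).

Lemma mxvec_index_eq p q (i k : 'I_p) (j l : 'I_q) :
  (mxvec_index i j == mxvec_index k l) = (i == k) && (j == l).
Proof.
apply/eqP/andP => [E|[/eqP-> /eqP->]] //.
by have := congr1 (@dec p q) E; rewrite !decK => -[-> ->].
Qed.

Lemma ev_tens p q (i : 'I_p) (j : 'I_q) : ev (mxvec_index i j) = tens (ev i) (ev j).
Proof.
apply/rowP => X; case/mxvec_indexP: X => k l.
by rewrite tensE !evE mxvec_index_eq -natrM mulnb.
Qed.

Lemma tmul_tens u v u' v' :
  tmul A B (tens u v) (tens u' v') = tens (amul A u u') (amul B v v').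
Proof.
apply/rowP => X; case/mxvec_indexP: X => r s.
rewrite tmulE tensE (amulE HA) (amulE HB) mulr_suml; apply: eq_bigr => i _.
rewrite exchange_big mulr_suml; apply: eq_bigr => k _; rewrite mulr_sumr.
apply: eq_bigr => j _; rewrite mulr_sumr; apply: eq_bigr => l _; rewrite !tensE /cst; ring.
Qed.

Lemma id_lin p : linear (fun x : 'rV[K]_p => x). Proof. by []. Qed.

Lemma ualgT : ualg Tg.
Proof.
case: HA => _ _ A3 A4; case: HB => _ _ B3 B4.
split => /=.
- by move=> k a b c; rewrite tmul_linl.
- by move=> k a b c; rewrite tmul_linr.
- move=> x; rewrite (lin_exp (tmul_linr A B (tens (aone A) (aone B))) x).
  rewrite [RHS](lin_exp (@id_lin _) x); apply: eq_bigr => X _; congr (_ *: _).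
  by case/mxvec_indexP: X => k l; rewrite ev_tens tmul_tens A3 B3.
- move=> x; rewrite (lin_exp (tmul_linl A B (tens (aone A) (aone B))) x).
  rewrite [RHS](lin_exp (@id_lin _) x); apply: eq_bigr => X _; congr (_ *: _).
  by case/mxvec_indexP: X => k l; rewrite ev_tens tmul_tens A4 B4.
Qed.

Lemma tensmulE N (u : 'rV[K]_n) (v : 'rV[K]_m) (D : 'M[K]_(n * m, N)) X :
  (tens u v *m D) 0 X = \sum_t \sum_t' u 0 t * v 0 t' * D (mxvec_index t t') X.
Proof.
rewrite mxE sum_mxvec; apply: eq_bigr => t _; apply: eq_bigr => t' _.
by rewrite tensE.
Qed.

Lemma sum_evm p (j : 'I_p) (a : K) (F : 'I_p -> K) : \sum_t F t * (a * ev t 0 j) = F j * a.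
Proof.
rewrite (bigD1 j) //= evE eqxx mulr1 big1 ?addr0 // => t /negbTE tj.
by rewrite evE tj mulr0n !mulr0.
Qed.
Lemma sum_evl p (j : 'I_p) (a : K) (F : 'I_p -> K) : \sum_t F t * (ev t 0 j * a) = F j * a.
Proof.
rewrite (bigD1 j) //= evE eqxx mul1r big1 ?addr0 // => t /negbTE tj.
by rewrite evE tj mulr0n mul0r mulr0.
Qed.
Lemma sum_ev2 p q (i : 'I_p) (c : 'I_q -> K) (F : 'I_p -> 'I_q -> K) :
  \sum_t \sum_t' ev i 0 t * c t' * F t t' = \sum_t' c t' * F i t'.
Proof.
rewrite (bigD1 i) //= [X in _ + X]big1 ?addr0.
  by apply: eq_bigr => t' _; rewrite evE eqxx mul1r.
move=> t /negbTE it; apply: big1 => t' _; by rewrite evE eq_sym it mulr0n !mul0r.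
Qed.
Lemma sum_ev3 p q (j : 'I_q) (c : 'I_p -> K) (F : 'I_p -> 'I_q -> K) :
  \sum_t \sum_t' c t * ev j 0 t' * F t t' = \sum_t c t * F t j.
Proof.
apply: eq_bigr => t _; rewrite (bigD1 j) //= [X in _ + X]big1 ?addr0.
  by rewrite evE eqxx mulr1.
move=> t' /negbTE jt; by rewrite evE eq_sym jt mulr0n mulr0 mul0r.
Qed.

Definition fT (T : 'rV[K]_((n * (n * n)) * (m * (m * m)))) : 'M[K]_(n * m, (n * m) * (n * m)) :=
  \matrix_(I, X) T 0 (mxvec_index
     (mxvec_index (dec I).1 (mxvec_index (dec (dec X).1).1 (dec (dec X).2).1))
     (mxvec_index (dec I).2 (mxvec_index (dec (dec X).1).2 (dec (dec X).2).2))).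
Lemma fTE T i j k p l q :
  fT T (mxvec_index i j) (mxvec_index (mxvec_index k p) (mxvec_index l q)) =
  T 0 (mxvec_index (mxvec_index i (mxvec_index k l)) (mxvec_index j (mxvec_index p q))).
Proof. by rewrite mxE !decK. Qed.

Definition gT (D : 'M[K]_(n * m, (n * m) * (n * m))) : 'rV[K]_((n * (n * n)) * (m * (m * m))) :=
  \row_Y D (mxvec_index (dec (dec Y).1).1 (dec (dec Y).2).1)
           (mxvec_index (mxvec_index (dec (dec (dec Y).1).2).1 (dec (dec (dec Y).2).2).1)
                        (mxvec_index (dec (dec (dec Y).1).2).2 (dec (dec (dec Y).2).2).2)).
Lemma gTE D i j k p l q :
  gT D 0 (mxvec_index (mxvec_index i (mxvec_index k l)) (mxvec_index j (mxvec_index p q))) =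
  D (mxvec_index i j) (mxvec_index (mxvec_index k p) (mxvec_index l q)).
Proof. by rewrite mxE !decK. Qed.

Lemma fT_gT D : fT (gT D) = D.
Proof.
apply/matrixP => I X; case/mxvec_indexP: I => i j; case/mxvec_indexP: X => K1 L1.
case/mxvec_indexP: K1 => k p; case/mxvec_indexP: L1 => l q.
by rewrite fTE gTE.
Qed.

Lemma fT_inj : injective fT.
Proof.
move=> x y E; apply/rowP => Y; case/mxvec_indexP: Y => al be.
case/mxvec_indexP: al => i x'; case/mxvec_indexP: x' => k l.
case/mxvec_indexP: be => j y'; case/mxvec_indexP: y' => p q.
by rewrite -!fTE E.
Qed.

Lemma fT_lin : linear fT.
Proof. by move=> k x y; apply/matrixP => I X; rewrite !mxE. Qed.

Definition colX (D : 'M[K]_(n * m, (n * m) * (n * m))) (j p q : 'I_m) : 'M[K]_(n, n * n) :=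
  \matrix_(i, x) D (mxvec_index i j) (mxvec_index (mxvec_index (dec x).1 p) (mxvec_index (dec x).2 q)).
Definition rowY (D : 'M[K]_(n * m, (n * m) * (n * m))) (i k l : 'I_n) : 'M[K]_(m, m * m) :=
  \matrix_(j, y) D (mxvec_index i j) (mxvec_index (mxvec_index k (dec y).1) (mxvec_index l (dec y).2)).

Lemma colX_nf D j p q : is_nf Tg D -> nfc A (colX D j p q).
Proof.
move=> NF i k r s.
have B3 : forall b, amul B (aone B) b = b by case: HB.
have B4 : forall b, amul B b (aone B) = b by case: HB.
set X := mxvec_index (mxvec_index r p) (mxvec_index s q).
have LHS (a b : 'rV[K]_m) : amul B a b = ev j ->
    \sum_t cst A i k t * colX D j p q t (mxvec_index r s) =
    (amul Tg (tens (ev i) a) (tens (ev k) b) *m D) 0 X.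
  move=> Eab; rewrite /= tmul_tens Eab tensmulE sum_ev3.
  by apply: eq_bigr => t _; rewrite mxE decK.
split.
  rewrite (LHS (aone B) (ev j)) ?B3 // (NF _ _).1 (L1 ualgT) sum_mxvec.
  apply: eq_bigr => u _; rewrite mxE decK.
  under eq_bigr => u' _ do rewrite -ev_tens evmulE ev_tens /= tmul_tens B3 tensE.
  by rewrite sum_evm.
rewrite (LHS (ev j) (aone B)) ?B4 // (NF _ _).2 (L2 ualgT) sum_mxvec.
apply: eq_bigr => v _; rewrite mxE decK.
under eq_bigr => v' _ do rewrite -ev_tens evmulE ev_tens /= tmul_tens B4 tensE.
by rewrite sum_evm.
Qed.

Lemma rowY_nf D i k l : is_nf Tg D -> nfc B (rowY D i k l).
Proof.
move=> NF j l' r s.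
have A3 : forall b, amul A (aone A) b = b by case: HA.
have A4 : forall b, amul A b (aone A) = b by case: HA.
set X := mxvec_index (mxvec_index k r) (mxvec_index l s).
have LHS (a b : 'rV[K]_n) : amul A a b = ev i ->
    \sum_t cst B j l' t * rowY D i k l t (mxvec_index r s) =
    (amul Tg (tens a (ev j)) (tens b (ev l')) *m D) 0 X.
  move=> Eab; rewrite /= tmul_tens Eab tensmulE sum_ev2.
  by apply: eq_bigr => t _; rewrite mxE decK.
split.
  rewrite (LHS (aone A) (ev i)) ?A3 // (NF _ _).1 (L1 ualgT) sum_mxvec exchange_big.
  apply: eq_bigr => u' _; rewrite mxE decK.
  under eq_bigr => u _ do rewrite -ev_tens evmulE ev_tens /= tmul_tens A3 tensE.
  by rewrite sum_evl.
rewrite (LHS (ev i) (aone A)) ?A4 // (NF _ _).2 (L2 ualgT) sum_mxvec exchange_big.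
apply: eq_bigr => v' _; rewrite mxE decK.
under eq_bigr => v _ do rewrite -ev_tens evmulE ev_tens /= tmul_tens A4 tensE.
by rewrite sum_evl.
Qed.

Lemma cstT i j k l r s :
  cst Tg (mxvec_index i j) (mxvec_index k l) (mxvec_index r s) = cst A i k r * cst B j l s.
Proof. by rewrite /cst !ev_tens /= tmul_tens tensE. Qed.

Lemma fT_tensE X Y i j k p l q :
  fT (tens (mxvec X) (mxvec Y)) (mxvec_index i j) (mxvec_index (mxvec_index k p) (mxvec_index l q))
  = X i (mxvec_index k l) * Y j (mxvec_index p q).
Proof. by rewrite fTE tensE !mxvecE. Qed.

Lemma sum_prod4 p q (a c : 'I_p -> K) (b d : 'I_q -> K) :
  \sum_t \sum_t' (a t * b t') * (c t * d t') = (\sum_t a t * c t) * (\sum_t' b t' * d t').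
Proof.
rewrite mulr_suml; apply: eq_bigr => t _; rewrite mulr_sumr; apply: eq_bigr => t' _; ring.
Qed.

Lemma fT_nf X Y : nfc A X -> nfc B Y -> nfc Tg (fT (tens (mxvec X) (mxvec Y))).
Proof.
move=> NX NY I K' R S.
case/mxvec_indexP: I => i j; case/mxvec_indexP: K' => k l.
case/mxvec_indexP: R => r r'; case/mxvec_indexP: S => s s'.
rewrite !sum_mxvec.
under eq_bigr => t _ do under eq_bigr => t' _ do rewrite cstT fT_tensE.
under [X in _ = X /\ _]eq_bigr => t _ do under eq_bigr => t' _ do rewrite cstT fT_tensE.
under [X in _ /\ _ = X]eq_bigr => t _ do under eq_bigr => t' _ do rewrite cstT fT_tensE.
split; rewrite !sum_prod4.
  by rewrite (NX i k r s).1 (NY j l r' s').1.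
by rewrite (NX i k r s).2 (NY j l r' s').2.
Qed.

Lemma part2 :
  (exists f : 'Hom('rV[K]_((n * (n * n)) * (m * (m * m))),
                     'M[K]_(n * m, (n * m) * (n * m))),
       (f @: vtens (frobspace A) (frobspace B))%VS = frobspace (talg A B) /\
       (vtens (frobspace A) (frobspace B) :&: lker f)%VS = 0%VS)
    /\ Frobdim (talg A B) = (Frobdim A * Frobdim B)%N.
Proof.
set F := linfun (lwrap fT_lin).
have FE T : F T = fT T by rewrite lfunE.
have inj : lker F == 0%VS by apply/lker0P => x y; rewrite !FE; apply: fT_inj.
have FA := frob_nfc HA; have FB := frob_nfc HB; have FT := frob_nfc ualgT.
have EQ : (F @: vtens (frobspace A) (frobspace B))%VS = frobspace Tg.
  apply/eqP; rewrite eqEsubv; apply/andP; split.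
    rewrite /vtens limg_span; apply/span_subvP => D /mapP [T /allpairsP [[X Y] [HX HY ->]] ->] /=.
    rewrite FE; apply/FT; apply: fT_nf; [apply/FA | apply/FB]; exact: vbasis_mem.
  apply/subvP => D HD; have NF := (frobP _ D).1 HD.
  rewrite -(fT_gT D) -FE; apply: memv_img; apply: tens_in_span.
    move=> b; case/mxvec_indexP: b => j y; case/mxvec_indexP: y => p q.
    have -> : vec_mx (\row_a gT D 0 (mxvec_index a (mxvec_index j (mxvec_index p q)))) = colX D j p q.
      apply/matrixP => i x; case/mxvec_indexP: x => k l.
      by rewrite !mxE !decK.
    by apply/FA; apply: colX_nf.
  move=> a; case/mxvec_indexP: a => i x; case/mxvec_indexP: x => k l.
  have -> : vec_mx (\row_b gT D 0 (mxvec_index (mxvec_index i (mxvec_index k l)) b)) = rowY D i k l.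
    apply/matrixP => j y; case/mxvec_indexP: y => p q.
    by rewrite !mxE !decK.
  by apply/FB; apply: rowY_nf.
split.
  by exists F; split => //; rewrite (eqP inj) capv0.
by rewrite /Frobdim -EQ limg_dim_eq ?(eqP inj) ?capv0 // dim_vtens.
Qed.

End T.

Section P.
Variable K : fieldType.
Local Notation ev := (ev K).
Variables (n m : nat) (A : algd K n) (B : algd K m) (HA : ualg A) (HB : ualg B).
Local Notation P := (palg A B).
Local Notation lsh := (lshift m).
Local Notation rsh := (rshift n).

Lemma lsub_evl (i : 'I_n) : lsubmx (ev (lsh i)) = ev i.
Proof. by apply/rowP=> j; rewrite mxE !evE eq_lshift. Qed.
Lemma rsub_evl (i : 'I_n) : rsubmx (ev (lsh i)) = 0.
Proof. by apply/rowP=> j; rewrite !mxE ?eq_lrshift ?eq_rlshift andbF. Qed.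
Lemma lsub_evr (i : 'I_m) : lsubmx (ev (rsh i)) = 0.
Proof. by apply/rowP=> j; rewrite !mxE ?eq_lrshift ?eq_rlshift andbF. Qed.
Lemma rsub_evr (i : 'I_m) : rsubmx (ev (rsh i)) = ev i.
Proof. by apply/rowP=> j; rewrite mxE !evE eq_rshift. Qed.

Lemma ualgP : ualg P.
Proof.
case: HA => A1 A2 A3 A4; case: HB => B1 B2 B3 B4; split => /=.
- by move=> k a b c; rewrite !linearP /= A1 B1 scale_row_mx add_row_mx.
- by move=> k a b c; rewrite !linearP /= A2 B2 scale_row_mx add_row_mx.
- by move=> a; rewrite row_mxKl row_mxKr A3 B3 hsubmxK.
- by move=> a; rewrite row_mxKl row_mxKr A4 B4 hsubmxK.
Qed.

Lemma cst_lll i k r : cst P (lsh i) (lsh k) (lsh r) = cst A i k r.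
Proof. by rewrite /cst /= !lsub_evl row_mxEl. Qed.
Lemma cst_llr i k r : cst P (lsh i) (lsh k) (rsh r) = 0.
Proof. by rewrite /cst /= !rsub_evl row_mxEr amul0l // mxE. Qed.
Lemma cst_rrr i k r : cst P (rsh i) (rsh k) (rsh r) = cst B i k r.
Proof. by rewrite /cst /= !rsub_evr row_mxEr. Qed.
Lemma cst_rrl i k r : cst P (rsh i) (rsh k) (lsh r) = 0.
Proof. by rewrite /cst /= !lsub_evr row_mxEl amul0l // mxE. Qed.
Lemma cst_lr i k R : cst P (lsh i) (rsh k) R = 0.
Proof. by rewrite /cst /= lsub_evl lsub_evr rsub_evl rsub_evr amul0l // amul0r // row_mx0 mxE. Qed.
Lemma cst_rl i k R : cst P (rsh i) (lsh k) R = 0.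
Proof. by rewrite /cst /= lsub_evl lsub_evr rsub_evl rsub_evr amul0l // amul0r // row_mx0 mxE. Qed.

Opaque cst lshift rshift.
Lemma splitl (i : 'I_n) : split (lsh i) = inl i. Proof. exact: (unsplitK (inl _ i)). Qed.
Lemma splitr (i : 'I_m) : split (rsh i) = inr i. Proof. exact: (unsplitK (inr _ i)). Qed.

Definition fL (D : 'M[K]_(n + m, (n + m) * (n + m))) : 'M[K]_(n, n * n) :=
  \matrix_(r, x) D (lsh r) (mxvec_index (lsh (dec x).1) (lsh (dec x).2)).
Definition fR (D : 'M[K]_(n + m, (n + m) * (n + m))) : 'M[K]_(m, m * m) :=
  \matrix_(r, x) D (rsh r) (mxvec_index (rsh (dec x).1) (rsh (dec x).2)).
Lemma fLE D r k l : fL D r (mxvec_index k l) = D (lsh r) (mxvec_index (lsh k) (lsh l)).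
Proof. by rewrite mxE decK. Qed.
Lemma fRE D r k l : fR D r (mxvec_index k l) = D (rsh r) (mxvec_index (rsh k) (rsh l)).
Proof. by rewrite mxE decK. Qed.

Definition embL (D1 : 'M[K]_(n, n * n)) : 'M[K]_(n + m, (n + m) * (n + m)) :=
  \matrix_(I, X) match split I, split (dec X).1, split (dec X).2 with
                 | inl i, inl j, inl l => D1 i (mxvec_index j l) | _, _, _ => 0 end.
Definition embR (D2 : 'M[K]_(m, m * m)) : 'M[K]_(n + m, (n + m) * (n + m)) :=
  \matrix_(I, X) match split I, split (dec X).1, split (dec X).2 with
                 | inr i, inr j, inr l => D2 i (mxvec_index j l) | _, _, _ => 0 end.
Definition emb D1 D2 := embL D1 + embR D2.

Lemma embE D1 D2 I J L : emb D1 D2 I (mxvec_index J L) =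
  match split I, split J, split L with
  | inl i, inl j, inl l => D1 i (mxvec_index j l)
  | inr i, inr j, inr l => D2 i (mxvec_index j l)
  | _, _, _ => 0 end.
Proof.
rewrite !mxE decK /=.
by case: (split I) => i; case: (split J) => j; case: (split L) => l; rewrite ?addr0 ?add0r.
Qed.

Ltac simpP := rewrite ?big_split_ord /=;
  repeat (setoid_rewrite cst_lll || setoid_rewrite cst_llr || setoid_rewrite cst_rrr ||
          setoid_rewrite cst_rrl || setoid_rewrite cst_lr || setoid_rewrite cst_rl ||
          setoid_rewrite embE || setoid_rewrite splitl || setoid_rewrite splitr ||
          setoid_rewrite fLE || setoid_rewrite fRE); cbv beta iota;
  repeat (setoid_rewrite mul0r || setoid_rewrite mulr0);
  rewrite ?big1_eq ?addr0 ?add0r.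

Ltac rw_body := rewrite ?cst_lll ?cst_llr ?cst_rrr ?cst_rrl ?cst_lr ?cst_rl ?embE ?splitl ?splitr ?fLE ?fRE /= ?mul0r ?mulr0.

Lemma fL_nf D : nfc P D -> nfc A (fL D).
Proof.
move=> N i k r s; have [N1 N2] := N (lsh i) (lsh k) (lsh r) (lsh s).
move: N1 N2; simpP => N1 N2. by split.
Qed.

Lemma fR_nf D : nfc P D -> nfc B (fR D).
Proof.
move=> N i k r s; have [N1 N2] := N (rsh i) (rsh k) (rsh r) (rsh s).
move: N1 N2; simpP => N1 N2. by split.
Qed.

Lemma emb_nf D1 D2 : nfc A D1 -> nfc B D2 -> nfc P (emb D1 D2).
Proof.
move=> NA NB I K' R S.
case: (split_ordP I) => i ->; case: (split_ordP K') => k ->;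
  case: (split_ordP R) => r ->; case: (split_ordP S) => s ->.
  all: split; rewrite ?big_split_ord /=.
  all: under [X in X + _ = _]eq_bigr => ? _ do rw_body.
  all: under [X in _ + X = _]eq_bigr => ? _ do rw_body.
  all: under [X in _ = X + _]eq_bigr => ? _ do rw_body.
  all: under [X in _ = _ + X]eq_bigr => ? _ do rw_body.
  all: rewrite ?big1_eq ?addr0 ?add0r.
all: try first [exact: (NA _ _ _ _).1 | exact: (NA _ _ _ _).2 | exact: (NB _ _ _ _).1 | exact: (NB _ _ _ _).2].
all: done.
Qed.

Definition eA : 'rV[K]_(n + m) := row_mx (aone A) 0.

Lemma amul_eAl x : amul P eA x = row_mx (lsubmx x) 0.
Proof. by case: HA => _ _ A3 _; rewrite /= row_mxKl row_mxKr A3 amul0l. Qed.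
Lemma amul_eAr x : amul P x eA = row_mx (lsubmx x) 0.
Proof. by case: HA => _ _ _ A4; rewrite /= row_mxKl row_mxKr A4 amul0r. Qed.
Lemma rl_ev_l (k : 'I_n) : row_mx (lsubmx (ev (lsh k))) (0 : 'rV_m) = ev (lsh k).
Proof.
rewrite lsub_evl; apply/rowP => J; case: (split_ordP J) => j ->.
  by rewrite row_mxEl !evE eq_lshift.
by rewrite row_mxEr evE ?eq_lrshift ?eq_rlshift mxE.
Qed.
Lemma rl_ev_r (k : 'I_m) : row_mx (lsubmx (ev (rsh k))) (0 : 'rV_m) = 0.
Proof. by rewrite lsub_evr row_mx0. Qed.
Lemma rl_entry_l (U : 'I_(n + m)) (r : 'I_n) : (row_mx (lsubmx (ev U)) (0 : 'rV_m)) 0 (lsh r) = (U == lsh r)%:R.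
Proof. by rewrite row_mxEl mxE evE. Qed.
Lemma rl_entry_r (U : 'I_(n + m)) (r : 'I_m) : (row_mx (lsubmx (ev U)) (0 : 'rV_m)) 0 (rsh r) = 0.
Proof. by rewrite row_mxEr mxE. Qed.

Lemma emb_uniq D : nfc P D -> fL D = 0 -> fR D = 0 -> D = 0.
Proof.
move=> N fL0 fR0; have NF := (nfP ualgP D).2 N.
have H1 K' R S : (row_mx (lsubmx (ev K')) (0 : 'rV_m) *m D) 0 (mxvec_index R S) =
    \sum_U D K' (mxvec_index U S) * (row_mx (lsubmx (ev U)) (0 : 'rV_m)) 0 R.
  have := congr1 (fun M : 'rV[K]_((n + m) * (n + m)) => M 0 (mxvec_index R S)) (NF eA (ev K')).1.
  rewrite amul_eAl /= => ->; rewrite (L1 ualgP); apply: eq_bigr => U _.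
  by rewrite evmulE amul_eAl.
have H2 I R S : (row_mx (lsubmx (ev I)) (0 : 'rV_m) *m D) 0 (mxvec_index R S) =
    \sum_V D I (mxvec_index R V) * (row_mx (lsubmx (ev V)) (0 : 'rV_m)) 0 S.
  have := congr1 (fun M : 'rV[K]_((n + m) * (n + m)) => M 0 (mxvec_index R S)) (NF (ev I) eA).2.
  rewrite amul_eAr /= => ->; rewrite (L2 ualgP); apply: eq_bigr => V _.
  by rewrite evmulE amul_eAr.
apply/matrixP => I X; case/mxvec_indexP: X => R S; rewrite mxE.
case: (split_ordP I) => i ->; case: (split_ordP R) => r ->; case: (split_ordP S) => s ->.
- by rewrite -fLE fL0 mxE.
- have := H2 (lsh i) (lsh r) (rsh s); rewrite rl_ev_l evmulE => ->.
  by under eq_bigr do rewrite rl_entry_r mulr0; rewrite big1_eq.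
- have := H1 (lsh i) (rsh r) (lsh s); rewrite rl_ev_l evmulE => ->.
  by under eq_bigr do rewrite rl_entry_r mulr0; rewrite big1_eq.
- have := H1 (lsh i) (rsh r) (rsh s); rewrite rl_ev_l evmulE => ->.
  by under eq_bigr do rewrite rl_entry_r mulr0; rewrite big1_eq.
- have := H1 (rsh i) (lsh r) (lsh s); rewrite rl_ev_r mul0mx mxE.
  by under eq_bigr do rewrite rl_entry_l; rewrite sum_delta'.
- have := H1 (rsh i) (lsh r) (rsh s); rewrite rl_ev_r mul0mx mxE.
  by under eq_bigr do rewrite rl_entry_l; rewrite sum_delta'.
- have := H2 (rsh i) (rsh r) (lsh s); rewrite rl_ev_r mul0mx mxE.
  by under eq_bigr do rewrite rl_entry_l; rewrite sum_delta'.
- by rewrite -fRE fR0 mxE.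
Qed.


Lemma fL_lin : linear fL.
Proof. by move=> k x y; apply/matrixP => r X; rewrite !mxE. Qed.
Lemma fR_lin : linear fR.
Proof. by move=> k x y; apply/matrixP => r X; rewrite !mxE. Qed.
Lemma embL_lin : linear embL.
Proof.
move=> k x y; apply/matrixP => I X; rewrite !mxE.
by case: (split I) => i; case: (split (dec X).1) => j; case: (split (dec X).2) => l; rewrite ?mxE ?mulr0 ?addr0.
Qed.
Lemma embR_lin : linear embR.
Proof.
move=> k x y; apply/matrixP => I X; rewrite !mxE.
by case: (split I) => i; case: (split (dec X).1) => j; case: (split (dec X).2) => l; rewrite ?mxE ?mulr0 ?addr0.
Qed.

Lemma fL_emb D1 D2 : fL (emb D1 D2) = D1.
Proof.
apply/matrixP => r X; case/mxvec_indexP: X => k l.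
by rewrite fLE embE !splitl.
Qed.
Lemma fR_emb D1 D2 : fR (emb D1 D2) = D2.
Proof.
apply/matrixP => r X; case/mxvec_indexP: X => k l.
by rewrite fRE embE !splitr.
Qed.

Lemma part1 :
  (exists (f : 'Hom('M[K]_(n + m, (n + m) * (n + m)), 'M[K]_(n, n * n)))
            (g : 'Hom('M[K]_(n + m, (n + m) * (n + m)), 'M[K]_(m, m * m))),
       [/\ (forall D, D \in frobspace (palg A B) ->
              f D \in frobspace A /\ g D \in frobspace B),
           (forall D1 D2, D1 \in frobspace A -> D2 \in frobspace B ->
              exists2 D, D \in frobspace (palg A B) & f D = D1 /\ g D = D2) &
           (forall D, D \in frobspace (palg A B) -> f D = 0 -> g D = 0 -> D = 0)])
    /\ Frobdim (palg A B) = (Frobdim A + Frobdim B)%N.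
Proof.
set f := linfun (lwrap fL_lin); set g := linfun (lwrap fR_lin).
set eL := linfun (lwrap embL_lin); set eR := linfun (lwrap embR_lin).
have fE D : f D = fL D by rewrite lfunE.
have gE D : g D = fR D by rewrite lfunE.
have eLE D : eL D = embL D by rewrite lfunE.
have eRE D : eR D = embR D by rewrite lfunE.
have FA D : D \in frobspace A <-> nfc A D := frob_nfc HA D.
have FB D : D \in frobspace B <-> nfc B D := frob_nfc HB D.
have FP D : D \in frobspace P <-> nfc P D := frob_nfc ualgP D.
have eR0 : embR 0 = 0 := linear0 (lwrap embR_lin).
have eL0 : embL 0 = 0 := linear0 (lwrap embL_lin).
have fLB x y : fL (x - y) = fL x - fL y := raddfB (lwrap fL_lin) x y.
have fRB x y : fR (x - y) = fR x - fR y := raddfB (lwrap fR_lin) x y.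
have embLE0 D : embL D = emb D 0.
  by rewrite /emb eR0 addr0.
have embRE0 D : embR D = emb 0 D.
  by rewrite /emb eL0 add0r.
have nA0 : nfc A 0 by apply/FA; apply: mem0v.
have nB0 : nfc B 0 by apply/FB; apply: mem0v.
have decomp D : D \in frobspace P -> D = emb (fL D) (fR D).
  move=> HD; apply/eqP; rewrite -subr_eq0; apply/eqP; apply: emb_uniq.
  - apply/FP; apply: memvB => //; apply/FP; apply: emb_nf.
      by apply: fL_nf; apply/FP.
    by apply: fR_nf; apply/FP.
  - by rewrite fLB fL_emb subrr.
  - by rewrite fRB fR_emb subrr.
split.
  exists f, g; split.
  - move=> D /FP HD; rewrite fE gE; split; apply/FA || apply/FB.
      exact: fL_nf.
    exact: fR_nf.
  - move=> D1 D2 /FA H1 /FB H2; exists (emb D1 D2).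
      by apply/FP; apply: emb_nf.
    by rewrite fE gE fL_emb fR_emb.
  - by move=> D /FP HD; rewrite fE gE; apply: emb_uniq.
have injL : lker eL == 0%VS.
  by apply/lker0P => x y; rewrite !eLE => /(congr1 fL); rewrite !embLE0 !fL_emb.
have injR : lker eR == 0%VS.
  by apply/lker0P => x y; rewrite !eRE => /(congr1 fR); rewrite !embRE0 !fR_emb.
have EQ : frobspace P = (eL @: frobspace A + eR @: frobspace B)%VS.
  apply/eqP; rewrite eqEsubv; apply/andP; split.
    apply/subvP => D HD; rewrite (decomp D HD) /emb.
    apply: memv_add; rewrite -?eLE -?eRE; apply: memv_img.
      by apply/FA; apply: fL_nf; apply/FP.
    by apply/FB; apply: fR_nf; apply/FP.
  rewrite subv_add; apply/andP; split; apply/subvP => x /memv_imgP [y Hy ->].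
    by rewrite eLE embLE0; apply/FP; apply: emb_nf => //; apply/FA.
  by rewrite eRE embRE0; apply/FP; apply: emb_nf => //; apply/FB.
have CAP : (eL @: frobspace A :&: eR @: frobspace B = 0)%VS.
  apply/eqP; rewrite -subv0; apply/subvP => x /memv_capP [/memv_imgP [y _ ->]].
  move=> /memv_imgP [z _]; rewrite eLE eRE => E.
  have : y = 0 by rewrite -(fL_emb y 0) -embLE0 E embRE0 fL_emb.
  by move=> ->; rewrite memv0 eL0.
rewrite /Frobdim EQ.
have := dimv_sum_cap (eL @: frobspace A) (eR @: frobspace B).
rewrite CAP dimv0 addn0 => ->.
by rewrite !limg_dim_eq ?(eqP injL) ?(eqP injR) ?capv0.
Qed.

End P.

Transparent cst lshift rshift.
Unset Implicit Arguments.

Theorem proposition8 (K : fieldType) (n m : nat) (A : algd K n) (B : algd K m) :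
  is_alg A -> is_alg B ->
  ( (exists (f : 'Hom('M[K]_(n + m, (n + m) * (n + m)), 'M[K]_(n, n * n)))
            (g : 'Hom('M[K]_(n + m, (n + m) * (n + m)), 'M[K]_(m, m * m))),
       [/\ (forall D, D \in frobspace (palg A B) ->
              f D \in frobspace A /\ g D \in frobspace B),
           (forall D1 D2, D1 \in frobspace A -> D2 \in frobspace B ->
              exists2 D, D \in frobspace (palg A B) & f D = D1 /\ g D = D2) &
           (forall D, D \in frobspace (palg A B) -> f D = 0 -> g D = 0 -> D = 0)])
    /\ Frobdim (palg A B) = (Frobdim A + Frobdim B)%N )
  /\
  ( (exists f : 'Hom('rV[K]_((n * (n * n)) * (m * (m * m))),
                     'M[K]_(n * m, (n * m) * (n * m))),
       (f @: vtens (frobspace A) (frobspace B))%VS = frobspace (talg A B) /\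
       (vtens (frobspace A) (frobspace B) :&: lker f)%VS = 0%VS)
    /\ Frobdim (talg A B) = (Frobdim A * Frobdim B)%N ).
Proof.
move=> HA HB; split.
  exact: (part1 (alg_ualg HA) (alg_ualg HB)).
exact: (part2 (alg_ualg HA) (alg_ualg HB)).
Qed.
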